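(* Let $r=(r_1,\dots,r_n)$ be a permutation of $[n]$, let $f_r(C^{(r_a)},C^{(r_b)})=1$ if $a<b$ and $0$ if $a>b$, and let $E$ be the set of all ordered pairs of distinct classes. For every $\varepsilon>0$ there exists $\mathbf{p}=(p^{(1)},\dots,p^{(n)})\in(0,1)^n$ with $\sum_ip^{(i)}=1$ such that, with $f_u(C^{(i)},C^{(j)})=p^{(i)}/(p^{(i)}+p^{(j)})$, $$\sum_{e\in E}\big(f_r(e)-f_u(e)\big)^2<\varepsilon.$$
   Context: $C^{(1)},\dots,C^{(n)}$ are class labels; $f_r$ are the ranking graph weights and $f_u$ the situational expert graph weights generated by the categorical distribution $\mathbf{p}$. *)

(* Defs.v *)
From mathcomp Require Import all_boot all_order all_fingroup all_algebra.
From mathcomp Require Import reals.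
Set Implicit Arguments. Unset Strict Implicit. Unset Printing Implicit Defensive.
Import Order.TTheory GRing.Theory Num.Theory.
Local Open Scope ring_scope.

(* Classes C^(1..n) are indexed by 'I_n.  A ranking r : 'S_n lists the classes
   r_1, ..., r_n; f_r (C^(r a)) (C^(r b)) = 1 if a < b and 0 if a > b. *)
Definition f_r (R : numDomainType) (n : nat) (r : 'S_n) (i j : 'I_n) : R :=
  if ((r^-1)%g i < (r^-1)%g j)%N then 1 else 0.

Definition f_u (R : numFieldType) (n : nat) (p : 'I_n -> R) (i j : 'I_n) : R :=
  p i / (p i + p j).

Definition sq_err (R : numFieldType) (n : nat) (r : 'S_n) (p : 'I_n -> R) : R :=
  \sum_(i < n) \sum_(j < n | j != i) (f_r R r i j - f_u p i j) ^+ 2.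

(* Main.v *)
Require Import Defs.
From mathcomp Require Import all_boot all_order all_fingroup all_algebra.
From mathcomp Require Import reals.
From mathcomp Require Import ring lra.
Import Order.TTheory GRing.Theory Num.Theory.
Local Open Scope ring_scope.

Lemma sq_small (R : realFieldType) (t u v : R) :
  0 < u -> 0 < v -> u <= t * v -> (u / (v + u)) ^+ 2 <= t.
Proof.
move=> u0 v0 h.
have vu0 : 0 < v + u by rewrite addr_gt0.
have q0 : 0 <= u / (v + u) by rewrite divr_ge0 // ltW.
have q1 : u / (v + u) <= 1 by rewrite ler_pdivrMr // mul1r lerDr ltW.
have q2 : u / (v + u) <= u / v.
  by rewrite ler_pM2l // lef_pV2 ?posrE ?addr_gt0 // lerDl ltW.
have q3 : u / v <= t by rewrite ler_pdivrMr // mulrC.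
rewrite expr2; apply: (le_trans _ q3); apply: (le_trans _ q2).
by rewrite ler_piMl.
Qed.

Lemma pow_gap (R : realFieldType) (t : R) (a b : nat) :
  0 < t -> t < 1 -> (a < b)%N -> t ^+ b <= t * t ^+ a.
Proof.
move=> t0 t1 ab.
rewrite -(subnKC ab) exprD [t * _]mulrC exprSr ler_piMr //.
  by rewrite mulr_ge0 ?exprn_ge0 // ltW.
by rewrite exprn_ile1 // ltW.
Qed.

Lemma fu_scale (R : realFieldType) (x y S : R) :
  0 < x -> 0 < y -> 0 < S -> (x / S) / (x / S + y / S) = x / (x + y).
Proof.
move=> x0 y0 S0.
have h1 : S != 0 by rewrite gt_eqF.
have h2 : x + y != 0 by rewrite gt_eqF // addr_gt0.
rewrite -mulrDl; field; rewrite ?h1 ?h2 //=; apply/andP; split=> //.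
Qed.

Theorem lemma7 (R : realType) (n : nat) (hn : (2 <= n)%N) (r : 'S_n) (eps : R) (heps : 0 < eps) :
  exists p : 'I_n -> R,
    [/\ (forall i, 0 < p i < 1), \sum_(i < n) p i = 1 & sq_err r p < eps].
Proof.
pose N : R := (n * n)%:R.
have N0 : 0 <= N by rewrite ler0n.
pose t : R := Num.min (2^-1) (eps / (N + 1)).
have N10 : 0 < N + 1 by rewrite ltr_wpDl.
have t0 : 0 < t by rewrite lt_min invr_gt0 ltr0n divr_gt0.
have t1 : t < 1 by rewrite gt_min; apply/orP; left; rewrite invf_lt1 // ltr1n.
have tle : t <= eps / (N + 1) by rewrite ge_min lexx orbT.
pose q (i : 'I_n) : R := t ^+ (r^-1)%g i.
have q0 : forall i, 0 < q i by move=> i; rewrite exprn_gt0.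
pose S := \sum_(i < n) q i.
have Sq : forall i, exists2 j, j != i & q i + q j <= S.
  move=> i.
  have [j ji] : exists j : 'I_n, j != i.
    case: (n) hn i => [|[|m]] // _ i.
    case: (eqVneq i ord0) => [->|ne]; first by exists ord_max.
    by exists ord0; rewrite eq_sym.
  exists j => //.
  rewrite /S (bigD1 i) //= (bigD1 j) //= addrA lerDl.
  by apply: sumr_ge0 => k _; apply: ltW.
have S0 : 0 < S.
  have [j _ h] := Sq (Ordinal (ltnW hn)). by apply: lt_le_trans h; rewrite addr_gt0.
exists (fun i => q i / S); split.
- move=> i; rewrite divr_gt0 //= ltr_pdivrMr // mul1r.
  have [j _ h] := Sq i; apply: lt_le_trans h; by rewrite ltrDl.
- by rewrite -mulr_suml divff // gt_eqF.
have key : forall i j : 'I_n, j != i ->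
    (f_r R r i j - f_u (fun i => q i / S) i j) ^+ 2 <= t.
  move=> i j ji.
  rewrite /f_u fu_scale // /f_r.
  have nij : (r^-1)%g i != (r^-1)%g j.
    by apply: contra ji => /eqP /perm_inj ->.
  case: ltnP => [lt|ge].
    have -> : 1 - q i / (q i + q j) = q j / (q i + q j).
      by field; rewrite gt_eqF // addr_gt0.
    by apply: sq_small => //; apply: pow_gap.
  have gt : ((r^-1)%g j < (r^-1)%g i)%N by rewrite ltn_neqAle eq_sym nij ge.
  rewrite sub0r sqrrN addrC; apply: sq_small => //; exact: pow_gap.
rewrite /sq_err.
apply: (le_lt_trans (y := \sum_(i < n) \sum_(j < n) t)).
  apply: ler_sum => i _.
  apply: (le_trans (y := \sum_(j < n | j != i) t)).
    by apply: ler_sum => j ji; apply: key.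
  rewrite [X in _ <= X](bigID (fun j => j != i)) /= lerDl.
  apply: sumr_ge0 => j _; exact: ltW.
rewrite !sumr_const !card_ord -mulrnA.
have -> : t *+ (n * n) = t * N by rewrite /N mulr_natr.
apply: (le_lt_trans (y := eps / (N + 1) * N)).
  by rewrite ler_pM2r ?tle // ?ltr0n ?muln_gt0; case: (n) hn.
rewrite mulrAC ltr_pdivrMr // ltr_pM2l // ltrDl ltr01 //.
Qed.
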